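(* Let $(R,\mathfrak m)$ be a Noetherian local ring, $X$ a finitely generated $R$-module, $N$ a Burch submodule of $X$, $t\ge1$ an integer, and $M$ a finitely generated $R$-module with $\operatorname{Tor}_t^R(M,X/N)=\operatorname{Tor}_{t+1}^R(M,X/N)=0$. Then $\operatorname{pd}_R M<t$. (In particular, for $X=R$: if $I$ is an ideal with $\mathfrak m I:_R\mathfrak m\neq I:_R\mathfrak m$ and $\operatorname{Tor}_t^R(R/I,M)=\operatorname{Tor}_{t+1}^R(R/I,M)=0$ for some $t\ge1$, then $\operatorname{pd}_RM<t$.)
   Context: For a submodule $N\subseteq X$, $(N:_X\mathfrak m)=\{x\in X:\mathfrak m x\subseteq N\}$. $N$ is a Burch submodule of $X$ if $\mathfrak m(N:_X\mathfrak m)\neq\mathfrak m N$. The projective dimension of the zero module is $-\infty$. *)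

(* Defs.v *)
From HB Require Import structures.
From mathcomp Require Import all_boot all_order all_algebra.
Set Implicit Arguments. Unset Strict Implicit. Unset Printing Implicit Defensive.
Import Order.TTheory GRing.Theory Num.Theory.
Local Open Scope ring_scope.

Section CommAlg.
Variable R : comNzRingType.

Definition is_unit (a : R) : Prop := exists b : R, a * b = 1.
Definition maxid (a : R) : Prop := ~ is_unit a.

Definition ideal (I : R -> Prop) : Prop :=
  I 0 /\ (forall a b, I a -> I b -> I (a + b)) /\ (forall r a, I a -> I (r * a)).

Definition noetherian : Prop :=
  forall I : R -> Prop, ideal I ->
    exists n (g : 'I_n -> R), forall x, I x <-> exists c : 'I_n -> R, x = \sum_i c i * g i.

(* local (R is nonzero since comNzRingType = comNzRingType): the non-units
   form an ideal, which is then the unique maximal ideal m *)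
Definition local_ring : Prop := ideal maxid.

Variable X : lmodType R.

Definition fin_gen : Prop :=
  exists n (g : 'I_n -> X), forall x, exists c : 'I_n -> R, x = \sum_i c i *: g i.

Definition submodule (N : X -> Prop) : Prop :=
  N 0 /\ (forall x y, N x -> N y -> N (x + y)) /\ (forall r x, N x -> N (r *: x)).

Definition colon_m (N : X -> Prop) : X -> Prop :=
  fun x => forall a, maxid a -> N (a *: x).

Definition m_times (S : X -> Prop) : X -> Prop :=
  fun x => exists n (a : 'I_n -> R) (s : 'I_n -> X),
    (forall i, maxid (a i) /\ S (s i)) /\ x = \sum_i a i *: s i.

Definition burch (N : X -> Prop) : Prop :=
  ~ (forall x, m_times (colon_m N) x <-> m_times N x).

End CommAlg.

(* Free resolutions by finitely generated free modules R^(rk i)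
   (elements are row vectors, differentials act by right multiplication):
     ... -> R^(rk 2) --dmx 1--> R^(rk 1) --dmx 0--> R^(rk 0) --eps--> M -> 0 *)
Record free_res (R : comNzRingType) (M : lmodType R) := FreeRes {
  rk : nat -> nat;
  dmx : forall i, 'M[R]_(rk i.+1, rk i);
  gen : 'I_(rk 0) -> M;
  eps_surj : forall x : M, exists v : 'rV[R]_(rk 0), x = \sum_j v 0 j *: gen j;
  exact0 : forall v : 'rV[R]_(rk 0),
      \sum_j v 0 j *: gen j = 0 <-> exists w : 'rV[R]_(rk 1), v = w *m dmx 0;
  exactS : forall i (v : 'rV[R]_(rk i.+1)),
      v *m dmx i = 0 <-> exists w : 'rV[R]_(rk i.+2), v = w *m dmx i.+1
}.

Section Tor.
Variables (R : comNzRingType) (M X : lmodType R) (F : free_res M).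

Definition bd i (x : 'I_(rk F i.+1) -> X) : 'I_(rk F i) -> X :=
  fun j => \sum_k dmx F i k j *: x k.

(* cycles of F (x) (X/N) in degree t, represented in X^(rk t) modulo N *)
Definition is_cycle (N : X -> Prop) (t : nat) : ('I_(rk F t) -> X) -> Prop :=
  match t return ('I_(rk F t) -> X) -> Prop with
  | 0 => fun _ => True
  | s.+1 => fun x => forall j, N (bd x j)
  end.

Definition tor_vanish (N : X -> Prop) (t : nat) : Prop :=
  forall x : 'I_(rk F t) -> X, is_cycle N x ->
    exists z : 'I_(rk F t.+1) -> X, forall k, N (x k - bd z k).

End Tor.

(* pd_R M < t : M has a (finite free) resolution with F_i = 0 for i >= t.
   (pd of the zero module is -oo < t, consistent with this.) *)
Definition pd_lt (R : comNzRingType) (M : lmodType R) (t : nat) : Prop :=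
  exists F : free_res M, forall i, (t <= i)%N -> rk F i = 0%N.

(* Main.v *)
Require Import Defs.
Set Warnings "-all".
From mathcomp Require Import all_boot all_order all_algebra.
From Stdlib Require Import Classical ClassicalEpsilon FunctionalExtensionality.
Set Implicit Arguments. Unset Strict Implicit. Unset Printing Implicit Defensive.
Import GRing.Theory.

Section Gen.
Local Open Scope ring_scope.
Variable R : comNzRingType.
Variable V : lmodType R.

Definition spans (S : V -> Prop) m (g : 'I_m -> V) :=
  forall x, S x <-> exists c : 'I_m -> R, x = \sum_i c i *: g i.
Definition minrel m (g : 'I_m -> V) :=
  forall c : 'I_m -> R, \sum_i c i *: g i = 0 -> forall j, maxid (c j).

Lemma sum_delta m (g : 'I_m -> V) j :
  \sum_i (if i == j then 1 else 0) *: g i = g j.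
Proof.
rewrite (bigD1 j) //= eqxx scale1r big1 ?addr0 // => i /negbTE ->.
by rewrite scale0r.
Qed.

Lemma spans_in S m (g : 'I_m -> V) : spans S g -> forall j, S (g j).
Proof. by move=> H j; apply/H; exists (fun i => if i == j then 1 else 0); rewrite sum_delta. Qed.

Lemma drop_gen S m (g : 'I_m.+1 -> V) (c : 'I_m.+1 -> R) j :
  spans S g -> is_unit (c j) -> \sum_i c i *: g i = 0 ->
  spans S (fun i => g (lift j i)).
Proof.
move=> Hs [b Hb] Hc x; split.
- move=> /Hs [d ->].
  have Hgj : g j = - \sum_i (b * c (lift j i)) *: g (lift j i).
    move: Hc; rewrite (bigD1_ord j) //= => Hc.
    have : b *: (c j *: g j + \sum_(i < m) c (lift j i) *: g (lift j i)) = 0.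
      by rewrite Hc scaler0.
    rewrite scalerDr scalerA mulrC Hb scale1r scaler_sumr => /eqP.
    rewrite addr_eq0 => /eqP ->; congr (- _); apply: eq_bigr => i _.
    by rewrite scalerA.
  exists (fun i => d (lift j i) - d j * (b * c (lift j i))).
  rewrite (bigD1_ord j) //= Hgj scalerN scaler_sumr.
  rewrite -sumrN -big_split /=; apply: eq_bigr => i _.
  by rewrite scalerBl scalerA addrC.
- move=> [d ->]; apply/Hs.
  exists (fun i => if unlift j i is Some k then d k else 0).
  rewrite (bigD1_ord j) //= unlift_none scale0r add0r.
  by apply: eq_bigr => i _; rewrite liftK.
Qed.

Lemma exists_min S : (exists m (g : 'I_m -> V), spans S g) ->
  exists m (g : 'I_m -> V), spans S g /\ minrel g.
Proof.
move=> [m0 [g0 H0]].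
suff: forall n m (g : 'I_m -> V), (m <= n)%N -> spans S g ->
  exists m (g : 'I_m -> V), spans S g /\ minrel g by move/(_ m0 m0 g0 (leqnn _) H0).
elim=> [|n IH] m g Hm Hs.
- exists m, g; split=> // c _ j; have := ltn_ord j; by rewrite ltnNge (leq_trans Hm).
- case: (classic (minrel g)) => Hmin; first by exists m, g.
  have [c Hc] : exists c : 'I_m -> R, ~ (\sum_i c i *: g i = 0 -> forall j, maxid (c j)).
    by apply: not_all_ex_not.
  have [Hc0 [j Hj]] : \sum_i c i *: g i = 0 /\ exists j, ~ maxid (c j).
    split; first by apply: NNPP => H; apply: Hc => /H.
    apply: not_all_ex_not => H; apply: Hc => _; exact: H.
  have Hu : is_unit (c j) by apply: NNPP.
  move: j c g Hm Hs Hmin Hc Hc0 Hj Hu; case: m => [[]//|m] j c g Hm Hs _ _ Hc0 _ Hu.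
  exact: (IH m _ Hm (drop_gen Hs Hu Hc0)).
Qed.

End Gen.
Section Noeth.
Local Open Scope ring_scope.
Variable R : comNzRingType.

Lemma sub_sum (V : lmodType R) (S : V -> Prop) m (c : 'I_m -> R) (g : 'I_m -> V) :
  submodule S -> (forall i, S (g i)) -> S (\sum_i c i *: g i).
Proof.
move=> [H0 [HD HZ]] Hg; apply: (big_ind S) => // i _; exact: HZ.
Qed.

Lemma noeth_fg : noetherian R -> forall n (S : 'rV[R]_n -> Prop), submodule S ->
  exists m (g : 'I_m -> 'rV[R]_n), spans S g.
Proof.
move=> HN; elim=> [|n IH] S HS.
  exists 0%N, (fun _ => 0) => x; split.
  - by move=> _; exists (fun _ => 0); rewrite big_ord0 thinmx0.
  - by move=> _; rewrite thinmx0; case: HS.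
pose S' := fun u : 'rV[R]_n => exists v, S v /\ v 0 ord0 = 0 /\
   forall k, v 0 (lift ord0 k) = u 0 k.
have HS' : submodule S'.
  case: HS => [H0 [HD HZ]]; split; [|split].
  - by exists 0; split=> //; split=> [|k]; rewrite !mxE.
  - move=> x y [v [Sv [v0 vx]]] [w [Sw [w0 wy]]]; exists (v + w).
    split; first exact: HD.
    by split; [rewrite mxE v0 w0 addr0 | move=> k; rewrite !mxE vx wy].
  - move=> r x [v [Sv [v0 vx]]]; exists (r *: v); split; first exact: HZ.
    by split; [rewrite mxE v0 mulr0 | move=> k; rewrite !mxE vx].
have [m1 [h Hh]] := IH S' HS'.
have vhP : forall i, exists v, S v /\ v 0 ord0 = 0 /\ forall k, v 0 (lift ord0 k) = h i 0 k.
  by move=> i; apply: (spans_in Hh).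
pose vh := fun i => proj1_sig (constructive_indefinite_description _ (vhP i)).
have vhS : forall i, S (vh i) /\ vh i 0 ord0 = 0 /\ forall k, vh i 0 (lift ord0 k) = h i 0 k.
  by move=> i; rewrite /vh; case: constructive_indefinite_description.
pose I := fun a : R => exists v, S v /\ v 0 ord0 = a.
have HI : ideal I.
  case: HS => [H0 [HD HZ]]; split; [|split].
  - by exists 0; split=> //; rewrite mxE.
  - move=> a b [v [Sv <-]] [w [Sw <-]]; exists (v + w); split; [exact: HD| by rewrite mxE].
  - move=> r a [v [Sv <-]]; exists (r *: v); split; [exact: HZ| by rewrite mxE].
have [q [cg Hcg]] := HN I HI.
have uP : forall l, exists v, S v /\ v 0 ord0 = cg l.
  move=> l; apply: (proj2 (Hcg _)); exists (fun i => if i == l then 1 else 0).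
  rewrite (bigD1 l) //= eqxx mul1r big1 ?addr0 // => i /negbTE ->; by rewrite mul0r.
pose u := fun l => proj1_sig (constructive_indefinite_description _ (uP l)).
have uS : forall l, S (u l) /\ u l 0 ord0 = cg l.
  by move=> l; rewrite /u; case: constructive_indefinite_description.
exists (m1 + q)%N, (fun i => match split i with inl a => vh a | inr b => u b end).
have gS : forall i, S (match split i with inl a => vh a | inr b => u b end).
  by move=> i; case: (split i) => [a|b]; [case: (vhS a) | case: (uS b)].
move=> x; split; last by move=> [c ->]; exact: sub_sum.
move=> Sx.
have HIx : I (x 0 ord0) by exists x.
have [e He] := proj1 (Hcg _) HIx.
pose y := x - \sum_l e l *: u l.
have Sy : S y.
  case: (HS) => [H0 [HD HZ]]; apply: HD => //.
  rewrite -scaleN1r; apply: HZ; apply: sub_sum => // l; by case: (uS l).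
have y0 : y 0 ord0 = 0.
  rewrite !mxE summxE He -sumrB big1 // => l _.
  by rewrite mxE (proj2 (uS l)) subrr.
have HS'y : S' (\row_k y 0 (lift ord0 k)).
  rewrite /S'; exists y; split; first exact: Sy.
  by split; [exact: y0 | move=> k; rewrite [RHS]mxE].
have [f Hf] := proj1 (Hh _) HS'y.
exists (fun i => match split i with inl a => f a | inr b => e b end).
rewrite big_split_ord /=.
have -> : x = y + \sum_l e l *: u l by rewrite /y subrK.
congr (_ + _); last first.
  by apply: eq_bigr => l _; rewrite (unsplitK (inr _ : 'I_m1 + 'I_q)).
under [X in _ = X]eq_bigr do rewrite (unsplitK (inl _ : 'I_m1 + 'I_q)).
apply/rowP => j; rewrite summxE; case: (unliftP ord0 j) => [k ->|->].
- have := congr1 (fun v : 'rV[R]_n => v 0 k) Hf; rewrite /= mxE summxE => ->.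
  by apply: eq_bigr => i _; rewrite !mxE (proj2 (proj2 (vhS i))).
- by rewrite y0 big1 // => i _; rewrite mxE (proj1 (proj2 (vhS i))) mulr0.
Qed.
End Noeth.
Section Constr.
Local Open Scope ring_scope.
Variable R : comNzRingType.

Definition minspec n (S : 'rV[R]_n -> Prop) (p : {m : nat & 'M[R]_(m, n)}) : Prop :=
  spans S (fun i => row i (projT2 p)) /\ minrel (fun i => row i (projT2 p)).

Definition mg (s : {n : nat & 'rV[R]_n -> Prop}) : {m : nat & 'M[R]_(m, projT1 s)} :=
  epsilon (inhabits (existT (fun m => 'M[R]_(m, projT1 s)) 0%N 0)) (@minspec (projT1 s) (projT2 s)).

Fixpoint st n0 (K0 : 'rV[R]_n0 -> Prop) (i : nat) : {n : nat & 'rV[R]_n -> Prop} :=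
  match i with
  | 0 => existT _ n0 K0
  | i'.+1 => existT (fun n => 'rV[R]_n -> Prop) (projT1 (mg (st K0 i')))
               (fun v => v *m projT2 (mg (st K0 i')) = 0)
  end.

Lemma minspec_ex (HN : noetherian R) n (S : 'rV[R]_n -> Prop) :
  submodule S -> exists p, minspec S p.
Proof.
move=> HS; have [m [g [Hs Hm]]] := exists_min (noeth_fg HN HS).
exists (existT _ m (\matrix_i g i)); rewrite /minspec /=.
have -> : (fun i => row i (\matrix_i g i)) = g.
  by apply: functional_extensionality => i; rewrite rowK.
by split.
Qed.

Lemma spans_mx n (S : 'rV[R]_n -> Prop) m (G : 'M[R]_(m, n)) :
  spans S (fun i => row i G) -> forall v, S v <-> exists w : 'rV_m, v = w *m G.
Proof.
move=> Hs v; rewrite Hs; split=> [[c ->]|[w ->]].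
- by exists (\row_i c i); rewrite mulmx_sum_row; apply: eq_bigr => i _; rewrite mxE.
- by exists (fun i => w 0 i); rewrite mulmx_sum_row.
Qed.

Lemma minrel_mx n m (G : 'M[R]_(m, n)) :
  minrel (fun i => row i G) -> forall w : 'rV_m, w *m G = 0 -> forall j, maxid (w 0 j).
Proof. by move=> Hm w; rewrite mulmx_sum_row => /Hm. Qed.

Lemma submod_ker n m (G : 'M[R]_(m, n)) : submodule (fun v : 'rV_m => v *m G = 0).
Proof.
split; [by rewrite mul0mx | split].
- by move=> x y Hx Hy; rewrite mulmxDl Hx Hy addr0.
- by move=> r x Hx; rewrite -scalemxAl Hx scaler0.
Qed.

Lemma rv0 n (v : 'rV[R]_n) : n = 0%N -> v = 0.
Proof. by move=> e; move: v; rewrite e => v; rewrite thinmx0. Qed.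

Lemma not_maxid1 : ~ maxid (1 : R).
Proof. by apply; exists 1; rewrite mulr1. Qed.

End Constr.
Section Key.
Local Open Scope ring_scope.
Variable R : comNzRingType.

Lemma mt0 (X : lmodType R) (S : X -> Prop) : m_times S 0.
Proof. by exists 0%N, (fun _ => 0), (fun _ => 0); split=> [[]//|]; rewrite big_ord0. Qed.

Lemma mtD (X : lmodType R) (S : X -> Prop) x y : m_times S x -> m_times S y -> m_times S (x + y).
Proof.
move=> [p [a [s [Hs ->]]]] [q [b [u [Hu ->]]]].
exists (p + q)%N, (fun i => match split i with inl k => a k | inr k => b k end),
  (fun i => match split i with inl k => s k | inr k => u k end); split.
  by move=> i; case: (split i).
rewrite big_split_ord /=; congr (_ + _); apply: eq_bigr => i _.
  by rewrite (unsplitK (inl _ : 'I_p + 'I_q)).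
by rewrite (unsplitK (inr _ : 'I_p + 'I_q)).
Qed.

Lemma mtZ (X : lmodType R) (S : X -> Prop) a x : maxid a -> S x -> m_times S (a *: x).
Proof.
move=> Ha Sx; exists 1%N, (fun _ => a), (fun _ => x); split=> //.
by rewrite big_ord1.
Qed.

Lemma mt_sum (X : lmodType R) (S : X -> Prop) I (r : seq I) (F : I -> X) :
  (forall i, m_times S (F i)) -> m_times S (\sum_(i <- r) F i).
Proof. move=> H; apply: (big_ind (m_times S)) => //; [exact: mt0 | exact: mtD]. Qed.

Lemma subN (X : lmodType R) (N : X -> Prop) x y : submodule N -> N x -> N y -> N (x - y).
Proof. by move=> [_ [HD HZ]] Hx Hy; apply: HD => //; rewrite -scaleN1r; apply: HZ. Qed.

Lemma dd0 (M : lmodType R) (F : free_res M) i p e :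
  \sum_l dmx F i.+1 p l * dmx F i l e = 0.
Proof.
have := proj2 (@exactS _ _ F i (row p (dmx F i.+1))) (ex_intro _ (delta_mx 0 p) (rowE _ _)).
move=> /(congr1 (fun v : 'rV[R]_(rk F i) => v 0 e)); rewrite !mxE => H.
transitivity (\sum_j row p (dmx F i.+1) 0 j * dmx F i j e); last exact: H.
by apply: eq_bigr => l _; rewrite mxE.
Qed.

Lemma key (X M : lmodType R) (F : free_res M) (N : X -> Prop) s :
  submodule N -> (forall i k j, maxid (dmx F i k j)) ->
  tor_vanish F N s.+1 -> tor_vanish F N s.+2 -> 'I_(rk F s.+1) -> ~ burch N.
Proof.
move=> HN Hmax Ht1 Ht2 e; apply.
have main : forall a y, maxid a -> colon_m N y -> m_times N (a *: y).
  move=> a y Ha Hy.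
  pose x := fun k : 'I_(rk F s.+1) => if k == e then y else 0.
  have cx : @is_cycle _ _ _ F N s.+1 x.
    move=> j /=; rewrite /bd (bigD1 e) //= /x eqxx big1 ?addr0.
      exact: Hy.
    by move=> k /negbTE ->; rewrite scaler0.
  have [z Hz] := Ht1 x cx.
  pose az := fun l => a *: z l.
  have caz : @is_cycle _ _ _ F N s.+2 az.
    move=> k /=.
    have -> : bd az k = a *: x k - a *: (x k - bd z k).
      rewrite scalerBr opprB addrC subrK /bd /az scaler_sumr; apply: eq_bigr => l _.
      by rewrite !scalerA mulrC.
    apply: subN => //; last by case: HN => [_ [_ HZ]]; apply: HZ.
    rewrite /x; case: (k == e); first exact: Hy.
    by rewrite scaler0; case: HN.
  have [w Hw] := Ht2 az caz.
  have Ey : a *: y = a *: (x e - bd z e) +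
     (\sum_l dmx F s.+1 l e *: (az l - bd w l) + \sum_l dmx F s.+1 l e *: bd w l).
    have Hb : \sum_l dmx F s.+1 l e *: az l = a *: bd z e.
      rewrite /bd scaler_sumr; apply: eq_bigr => l _.
      by rewrite /az !scalerA mulrC.
    rewrite -big_split /=.
    under eq_bigr do rewrite -scalerDr subrK.
    by rewrite Hb -scalerDr subrK /x eqxx.
  have Z : \sum_l dmx F s.+1 l e *: bd w l = 0.
    rewrite /bd; under eq_bigr do rewrite scaler_sumr.
    rewrite exchange_big /= big1 // => p _.
    under eq_bigr do rewrite scalerA.
    by rewrite -scaler_suml; under eq_bigr do rewrite mulrC; rewrite dd0 scale0r.
  rewrite Ey Z addr0; apply: mtD.
    apply: mtZ => //; have := Hz e; by rewrite /x eqxx.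
  by apply: mt_sum => l; apply: mtZ; [exact: Hmax | exact: Hw].
move=> v; split.
- move=> [p [b [u [Hu ->]]]]; apply: mt_sum => i.
  by apply: main; case: (Hu i).
- move=> [p [b [u [Hu ->]]]]; exists p, b, u; split=> // i.
  case: (Hu i) => Hb Nu; split=> // c _.
  by case: HN => [_ [_ HZ]]; apply: HZ.
Qed.
End Key.
Section Main.
Local Open Scope ring_scope.

Lemma rk0_next (R : comNzRingType) n m (G : 'M[R]_(m, n)) :
  n = 0%N -> minrel (fun i => row i G) -> m = 0%N.
Proof.
case: m G => [//|m] G Hn Hm; exfalso.
have := Hm (fun i => if i == ord0 then 1 else 0); rewrite sum_delta.
move=> /(_ (rv0 _ Hn) ord0); rewrite eqxx; exact: not_maxid1.
Qed.

End Main.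

Theorem corollary3p14 (R : comNzRingType) (X M : lmodType R) (N : X -> Prop) (t : nat) :
  noetherian R -> local_ring R ->
  fin_gen X -> submodule N -> burch N ->
  (1 <= t)%N -> fin_gen M ->
  (forall F : free_res M, tor_vanish F N t /\ tor_vanish F N t.+1) ->
  pd_lt M t.
Proof.
move=> HN _ _ HNsub Hburch Ht [n [g Hg]] Htor.
have [n0 [g0 [Hs0 Hm0]]] : exists m (g : 'I_m -> M), spans (fun _ => True) g /\ minrel g.
  by apply: exists_min; exists n, g => x; split=> // _; exact: Hg.
pose K0 := fun v : 'rV[R]_n0 => (\sum_j v 0 j *: g0 j = 0)%R.
have HK0 : submodule K0.
  split; [|split].
  - by rewrite /K0 big1 // => j _; rewrite mxE scale0r.
  - move=> v w; rewrite /K0 => Hv Hw.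
    under eq_bigr do rewrite mxE scalerDl.
    by rewrite big_split /= Hv Hw addr0.
  - move=> r v; rewrite /K0 => Hv.
    under eq_bigr do rewrite mxE -scalerA.
    by rewrite -scaler_sumr Hv scaler0.
pose stf := st K0.
have inv : forall i, submodule (projT2 (stf i)).
  by case=> [|i] //=; exact: submod_ker.
have spec : forall i, minspec (projT2 (stf i)) (mg (stf i)).
  by move=> i; apply: epsilon_spec; exact: minspec_ex.
have surj : forall x : M, exists v : 'rV[R]_n0, x = (\sum_j v 0 j *: g0 j)%R.
  move=> x; have [c ->] := proj1 (Hs0 x) I.
  by exists (\row_j c j)%R; apply: eq_bigr => j _; rewrite mxE.
pose F := @FreeRes R M (fun i => projT1 (stf i)) (fun i => projT2 (mg (stf i))) g0 surj
  (fun v => spans_mx (proj1 (spec 0%N)) v) (fun i v => spans_mx (proj1 (spec i.+1)) v).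
have Hmax : forall i k j, maxid (dmx F i k j).
  case=> [|i] k j.
  - have := spans_in (proj1 (spec 0%N)) k; rewrite /= /K0 => H.
    by have := Hm0 _ H j; rewrite mxE.
  - have := spans_in (proj1 (spec i.+1)) k => /= H.
    by have := minrel_mx (proj2 (spec i)) H (j:=j); rewrite mxE.
have Hz : forall i, rk F i = 0%N -> rk F i.+1 = 0%N.
  move=> i Hi; exact: (rk0_next Hi (proj2 (spec i))).
case: t Ht Htor => [//|s] _ Htor.
have Hs : rk F s.+1 = 0%N.
  case E: (rk F s.+1) => [//|r]; exfalso.
  have e : 'I_(rk F s.+1) by rewrite E; exact: ord0.
  have [H1 H2] := Htor F.
  exact: (key HNsub Hmax H1 H2 e Hburch).
exists F; elim=> [//|i IH]; rewrite leq_eqVlt => /orP [/eqP <- //|].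
by rewrite ltnS => /IH; exact: Hz.
Qed.
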